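(* Let $U=\sum_{k=0}^rB_kE_2^k$ be a quasiautomorphic form of weight $w$ and depth $r$ for $\mathfrak{t}_\mu$. Then for every $0\le n\le r$ and all $z\in\mathbb{H}$, $$\frac{1}{z^{w-r}}\sum_{\ell=0}^{n}\binom{n}{\ell}g_\ell(Sz)\,(Sz)^{n-\ell}=(-1)^n\sum_{m=0}^{r-n}\binom{r-n}{m}g_m(z)\,z^{r-n-m},$$ where $Sz=-1/z$; equivalently $f_n(Sz)/z^{w-r}=(-1)^nf_{r-n}(z)$.
   Context: Let $\mu\ge 3$, $\varpi_\mu=2\cos(\pi/\mu)$, $T=\begin{pmatrix}1&\varpi_\mu\\0&1\end{pmatrix}$, $S=\begin{pmatrix}0&-1\\1&0\end{pmatrix}$, $\mathfrak{t}_\mu\subset\mathrm{SL}_2(\mathbb{R})$ generated by $T,S$. $\mathcal{A}_v(\mathfrak{t}_\mu)$ ($v$ even) is the space of holomorphic $f$ on $\mathbb{H}$ with $f(\gamma z)=(cz+d)^vf(z)$ for $\gamma\in\mathfrak{t}_\mu$, holomorphic at $i\infty$. $E_2$ is holomorphic on $\mathbb{H}$ with $E_2(Tz)=E_2(z)$, $E_2(Sz)/z^2=E_2(z)+C/z$, $C=\mathrm{lcm}(2,\mu)/(\pi i)$. A quasiautomorphic form of even weight $w$, depth $0\le r\le w/2$ is $U=\sum_{k=0}^rB_kE_2^k$ with $B_k\in\mathcal{A}_{w-2k}(\mathfrak{t}_\mu)$. With $\{r,\ell\}_m=\frac{(r-\ell)!(m+\ell)!}{r!\,m!}$, $g_\ell=C^\ell\sum_{m=0}^{r-\ell}\{r,\ell\}_mB_{\ell+m}E_2^m$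 for $0\le\ell\le r$, and $f_n(z)=\sum_{k=0}^n\binom{n}{k}g_k(z)z^{n-k}$ for $0\le n\le r$. *)

(* Defs.v *)
From Stdlib Require Import Reals Arith.
From Coquelicot Require Import Coquelicot.

Open Scope R_scope.

(* A 2x2 real matrix (a, b, c, d) = [[a, b], [c, d]]. *)
Definition mat := (R * R * R * R)%type.

Definition matmul (g h : mat) : mat :=
  let '(a, b, c, d) := g in
  let '(a', b', c', d') := h in
  (a * a' + b * c', a * b' + b * d', c * a' + d * c', c * b' + d * d').

(* inverse of a determinant-one matrix *)
Definition matinv1 (g : mat) : mat :=
  let '(a, b, c, d) := g in (d, - b, - c, a).

Definition varpi (mu : nat) : R := 2 * cos (PI / INR mu).

Definition Tmat (mu : nat) : mat := (1, varpi mu, 0, 1).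
Definition Smat : mat := (0, -1, 1, 0).

Inductive in_hecke (mu : nat) : mat -> Prop :=
| hecke_T : in_hecke mu (Tmat mu)
| hecke_S : in_hecke mu Smat
| hecke_mul : forall g h, in_hecke mu g -> in_hecke mu h -> in_hecke mu (matmul g h)
| hecke_inv : forall g, in_hecke mu g -> in_hecke mu (matinv1 g).

Open Scope C_scope.

Definition mob (g : mat) (z : C) : C :=
  let '(a, b, c, d) := g in (RtoC a * z + RtoC b) / (RtoC c * z + RtoC d).
Definition jfac (g : mat) (z : C) : C :=
  let '(a, b, c, d) := g in RtoC c * z + RtoC d.

Definition in_H (z : C) : Prop := (0 < Im z)%R.

Definition holo_H (f : C -> C) : Prop :=
  forall z : C, in_H z -> ex_derive (K := C_AbsRing) (V := C_NormedModule) f z.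

(* holomorphic at i*infinity: bounded as Im z -> +infinity *)
Definition holo_at_infty (f : C -> C) : Prop :=
  exists M c : R, forall z : C, (c < Im z)%R -> (Cmod (f z) <= M)%R.

Definition automorphic (mu v : nat) (f : C -> C) : Prop :=
  holo_H f /\
  (forall g, in_hecke mu g -> forall z, in_H z -> f (mob g z) = (jfac g z) ^ v * f z) /\
  holo_at_infty f.

Definition Cconst (mu : nat) : C := RtoC (INR (Nat.lcm 2 mu)) / (RtoC PI * Ci).

Definition E2_spec (mu : nat) (E2 : C -> C) : Prop :=
  holo_H E2 /\
  (forall z, in_H z -> E2 (mob (Tmat mu) z) = E2 z) /\
  (forall z, in_H z -> E2 (mob Smat z) / z ^ 2 = E2 z + Cconst mu / z).

(* real binomial coefficient n choose k (for k <= n) *)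
Definition binomC (n k : nat) : C :=
  RtoC (INR (fact n) / (INR (fact k) * INR (fact (n - k))))%R.

Definition brace (r l m : nat) : C :=
  RtoC (INR (fact (r - l) * fact (m + l)) / INR (fact r * fact m))%R.

Definition gfun (mu : nat) (E2 : C -> C) (B : nat -> C -> C) (r l : nat) (z : C) : C :=
  (Cconst mu) ^ l *
  sum_n (fun m => brace r l m * B (l + m)%nat z * (E2 z) ^ m) (r - l).

Definition ffun (mu : nat) (E2 : C -> C) (B : nat -> C -> C) (r n : nat) (z : C) : C :=
  sum_n (fun k => binomC n k * gfun mu E2 B r k z * z ^ (n - k)) n.

(* Main.v *)
Require Import Defs.
From Stdlib Require Import Reals Arith.
From Coquelicot Require Import Coquelicot.
From Stdlib Require Import Lia Lra.
Open Scope C_scope.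


Fixpoint bin (n k : nat) : nat :=
  match n, k with
  | _, O => 1%nat
  | O, S _ => 0%nat
  | S n', S k' => (bin n' k' + bin n' (S k'))%nat
  end.

Lemma bin_gt : forall n k, (n < k)%nat -> bin n k = 0%nat.
Proof.
  induction n; intros k H; destruct k; simpl; try lia; auto.
  rewrite !IHn; lia.
Qed.

Lemma bin_0 : forall n, bin n 0 = 1%nat.
Proof. destruct n; reflexivity. Qed.

Lemma bin_fact : forall n k, (k <= n)%nat -> (bin n k * fact k * fact (n - k))%nat = fact n.
Proof.
  induction n; intros k H.
  - destruct k; simpl; lia.
  - destruct k.
    + rewrite bin_0. simpl. lia.
    + simpl bin. destruct (Nat.eq_dec k n) as [->|Hne].
      * rewrite (bin_gt n (S n)) by lia. rewrite Nat.sub_diag.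
        pose proof (IHn n (le_n _)) as E. rewrite Nat.sub_diag in E.
        change (fact (S n)) with (S n * fact n)%nat. change (fact (S n)) with (S n * fact n)%nat in *.
        simpl fact at 2. simpl in E. simpl. nia.
      * assert (Hk : (k < n)%nat) by lia.
        destruct (Nat.le_exists_sub (S k) n Hk) as [m [Hm _]]. subst n.
        pose proof (IHn k ltac:(lia)) as E1. pose proof (IHn (S k) ltac:(lia)) as E2.
        replace (m + S k - k)%nat with (S m) in E1 by lia.
        replace (m + S k - S k)%nat with m in E2 by lia.
        replace (S (m + S k) - S k)%nat with (S m) by lia.
        change (fact (S (m + S k))) with (S (m + S k) * fact (m + S k))%nat.
        change (fact (S k)) with (S k * fact k)%nat in *.
        change (fact (S m)) with (S m * fact m)%nat in *.
        nia.
Qed.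

Lemma fact_nz : forall n, fact n <> 0%nat.
Proof. intro n; pose proof (lt_O_fact n); lia. Qed.

Lemma bin_sym : forall n k, (k <= n)%nat -> bin n (n - k) = bin n k.
Proof.
  intros n k H.
  pose proof (bin_fact n k H) as E1. pose proof (bin_fact n (n-k) ltac:(lia)) as E2.
  replace (n - (n - k))%nat with k in E2 by lia.
  assert (bin n (n-k) * (fact (n-k) * fact k) = bin n k * (fact (n-k) * fact k))%nat by nia.
  apply Nat.mul_cancel_r in H0; auto.
  pose proof (fact_nz (n-k)); pose proof (fact_nz k); nia.
Qed.

Ltac gen_sums := repeat match goal with |- context [sum_n ?f ?n] =>
  let s := fresh "s" in generalize (sum_n f n : C); intro s end.
Ltac cring := gen_sums; ring.

Definition cb (n k : nat) : C := RtoC (INR (bin n k)).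

Lemma sC_ext : forall (f g : nat -> C) n, (forall k, (k <= n)%nat -> f k = g k) ->
  @eq C (sum_n f n) (sum_n g n).
Proof. intros; apply sum_n_ext_loc; auto. Qed.

Lemma sC_plus : forall (f g : nat -> C) n,
  @eq C (sum_n (fun k => f k + g k) n) (sum_n f n + sum_n g n).
Proof. intros; exact (sum_n_plus f g n). Qed.

Lemma sC_mult_l : forall (a : C) (f : nat -> C) n,
  @eq C (sum_n (fun k => a * f k) n) (a * sum_n f n).
Proof. intros; exact (sum_n_mult_l a f n). Qed.

Lemma sC_S : forall (f : nat -> C) n, @eq C (sum_n f (S n)) (sum_n f n + f (S n)).
Proof. intros; exact (sum_Sn f n). Qed.

Lemma sC_O : forall (f : nat -> C), @eq C (sum_n f 0) (f 0%nat).
Proof. intros; exact (sum_O f). Qed.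

Lemma sC_shift0 : forall (f : nat -> C) n, @eq C (sum_n f (S n)) (f 0%nat + sum_n (fun i => f (S i)) n).
Proof.
  intros f n; induction n.
  - rewrite sC_S, !sC_O; reflexivity.
  - rewrite sC_S, IHn, (sC_S (fun i => f (S i))). cring.
Qed.

Lemma sC_zero : forall n, @eq C (sum_n (fun _ => (0:C)) n) 0.
Proof. induction n; [rewrite sC_O | rewrite sC_S, IHn]; cring. Qed.

Lemma cb_pascal : forall n k, cb (S n) (S k) = cb n k + cb n (S k).
Proof. intros; unfold cb; simpl bin; rewrite plus_INR, RtoC_plus; reflexivity. Qed.

Lemma cb_gt : forall n k, (n < k)%nat -> cb n k = 0.
Proof. intros; unfold cb; rewrite bin_gt by auto; reflexivity. Qed.

Lemma cb_0 : forall n, cb n 0 = 1.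
Proof. intros; unfold cb; rewrite bin_0; reflexivity. Qed.

Lemma pascal_sum : forall (F : nat -> C) K,
  @eq C (sum_n (fun l => cb (S K) l * F l) (S K))
  (sum_n (fun l => cb K l * F l) K + sum_n (fun l => cb K l * F (S l)) K).
Proof.
  intros F K.
  rewrite sC_shift0, cb_0.
  erewrite sC_ext; [|intros; rewrite cb_pascal; reflexivity].
  assert (HH : @eq C (sum_n (fun l => cb K l * F l) K) (sum_n (fun l => cb K l * F l) (S K))).
  { rewrite sC_S, cb_gt by lia. cring. }
  rewrite HH.
  rewrite sC_shift0, cb_0.
  erewrite (sC_ext (fun i => (cb K i + cb K (S i)) * F (S i))); [|intros; ring_simplify; reflexivity].
  rewrite sC_plus. cring.
Qed.

Definition Lf K r N (u c : C) : C :=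
  sum_n (fun l => cb K l * ((-1)^l * cb (r-l) N * c^l * (u+c)^(K-l))) K.
Definition Rf K r N (u c : C) : C :=
  sum_n (fun m => cb K m * (cb (r-m) (r-N) * c^m * u^(K-m))) K.

Lemma core : forall K r N u c, (K <= r)%nat -> (N <= r)%nat -> Lf K r N u c = Rf K r N u c.
Proof.
  induction K; intros r N u c HK HN.
  - unfold Lf, Rf; rewrite !sC_O, !Nat.sub_0_r. unfold cb at 2 4.
    rewrite bin_sym by auto. simpl; cring.
  - unfold Lf, Rf.
    rewrite (pascal_sum (fun l => ((-1)^l * cb (r-l) N * c^l * (u+c)^(S K-l)))).
    rewrite (pascal_sum (fun m => (cb (r-m) (r-N) * c^m * u^(S K-m)))).
    assert (E1 : sum_n (fun l => cb K l * ((-1)^l * cb (r-l) N * c^l * (u+c)^(S K-l))) K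
               = (u + c) * Lf K r N u c).
    { unfold Lf; rewrite <- sC_mult_l; apply sC_ext; intros l Hl.
      replace (S K - l)%nat with (S (K - l)) by lia. simpl; cring. }
    assert (E2 : sum_n (fun l => cb K l * ((-1)^(S l) * cb (r - S l) N * c^(S l) * (u+c)^(S K - S l))) K
               = - c * Lf K (r-1) N u c).
    { unfold Lf; rewrite <- sC_mult_l; apply sC_ext; intros l Hl.
      replace (S K - S l)%nat with (K - l)%nat by lia.
      replace (r - S l)%nat with (r - 1 - l)%nat by lia. simpl; cring. }
    assert (E3 : sum_n (fun m => cb K m * (cb (r-m) (r-N) * c^m * u^(S K-m))) K
               = u * Rf K r N u c).
    { unfold Rf; rewrite <- sC_mult_l; apply sC_ext; intros l Hl.
      replace (S K - l)%nat with (S (K - l)) by lia. simpl; cring. }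
    rewrite E1, E2, E3.
    destruct N as [|N'].
    + assert (E4 : @eq C (sum_n (fun m => cb K m * (cb (r - S m) (r - 0) * c^(S m) * u^(S K - S m))) K) 0).
      { rewrite <- (sC_zero K). apply sC_ext; intros k Hk. rewrite (cb_gt (r - S k)) by lia; cring. }
      assert (E5 : Lf K (r-1) 0 u c = Lf K r 0 u c).
      { unfold Lf; apply sC_ext; intros; rewrite !cb_0; cring. }
      rewrite E4, E5, (IHK r 0%nat) by lia. cring.
    + assert (E4 : sum_n (fun m => cb K m * (cb (r - S m) (r - S N') * c^(S m) * u^(S K - S m))) K
                 = c * Rf K (r-1) N' u c).
      { unfold Rf; rewrite <- sC_mult_l; apply sC_ext; intros l Hl.
        replace (S K - S l)%nat with (K - l)%nat by lia.
        replace (r - S l)%nat with (r - 1 - l)%nat by lia.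
        replace (r - S N')%nat with (r - 1 - N')%nat by lia. simpl; cring. }
      assert (E5 : Lf K r (S N') u c = Lf K (r-1) (S N') u c + Lf K (r-1) N' u c).
      { unfold Lf; rewrite <- sC_plus; apply sC_ext; intros l Hl.
        replace (r - l)%nat with (S (r - 1 - l)) by lia. rewrite cb_pascal. cring. }
      rewrite E4, <- (IHK r (S N')), <- (IHK (r-1)%nat N') by lia.
      rewrite E5. cring.
Qed.

Lemma tri : forall (G : nat -> C) l r, (l <= r)%nat ->
  @eq C (sum_n (fun m => G (l + m)%nat) (r - l))
        (sum_n (fun k => if (l <=? k)%nat then G k else (0:C)) r).
Proof.
  intros G l r H. induction r.
  - assert (l = 0%nat) by lia; subst. rewrite !sC_O. simpl. reflexivity.
  - destruct (Nat.eq_dec l (S r)) as [->|Hne].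
    + rewrite Nat.sub_diag, sC_O, Nat.add_0_r.
      assert (E : @eq C (sum_n (fun k => if (S r <=? k)%nat then G k else (0:C)) r) 0).
      { etransitivity; [apply sC_ext with (g := fun _ => (0:C)) | apply sC_zero].
        intros k Hk. destruct (Nat.leb_spec (S r) k); [lia|reflexivity]. }
      rewrite sC_S, E. rewrite Nat.leb_refl. cring.
    + replace (S r - l)%nat with (S (r - l)) by lia.
      rewrite !sC_S, IHr by lia.
      replace (l + S (r - l))%nat with (S r) by lia.
      destruct (Nat.leb_spec l (S r)); [|lia]. reflexivity.
Qed.

Lemma ext_range : forall (f : nat -> C) a b, (a <= b)%nat ->
  (forall l, (a < l <= b)%nat -> f l = 0) -> @eq C (sum_n f b) (sum_n f a).
Proof.
  intros f a b H Hz. induction b.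
  - assert (a = 0%nat) by lia; subst; reflexivity.
  - destruct (Nat.eq_dec a (S b)) as [->|Hne]; [reflexivity|].
    rewrite sC_S, IHb; [| lia | intros; apply Hz; lia]. rewrite (Hz (S b)) by lia. cring.
Qed.

Lemma switch : forall (u : nat -> nat -> C) m n,
  @eq C (sum_n (fun i => sum_n (u i) n) m) (sum_n (fun j => sum_n (fun i => u i j) m) n).
Proof. intros; exact (sum_n_switch u m n). Qed.

Lemma Cpow_sub : forall (z : C) a b, (b <= a)%nat -> z <> 0 -> z ^ (a - b) = z ^ a / z ^ b.
Proof.
  intros z a b H Hz. replace a with ((a - b) + b)%nat at 2 by lia.
  rewrite Cpow_add_r. field. apply Cpow_nz; auto.
Qed.

Lemma m1_nz : (-1 : C) <> 0.
Proof. intro H. apply (f_equal Re) in H. simpl in H. lra. Qed.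

Lemma m1pow_sub : forall n l, (l <= n)%nat -> (-1 : C) ^ (n - l) = (-1) ^ n * (-1) ^ l.
Proof.
  intros n l H.
  assert (E : (-1 : C) ^ l * (-1) ^ l = 1).
  { rewrite <- Cpow_mult_l. replace ((-1) * (-1) : C) with (1 : C) by ring. apply Cpow_1_l. }
  replace n with ((n - l) + l)%nat at 2 by lia. rewrite Cpow_add_r.
  rewrite <- Cmult_assoc, E. ring.
Qed.

Lemma INR_fact_nz : forall n, INR (fact n) <> 0%R.
Proof. intro n; apply not_0_INR, fact_nz. Qed.

Lemma binR : forall a b, (b <= a)%nat ->
  INR (bin a b) = (INR (fact a) / (INR (fact b) * INR (fact (a - b))))%R.
Proof.
  intros a b H. rewrite <- (bin_fact a b H), !mult_INR. field.
  split; apply INR_fact_nz.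
Qed.

Lemma bin_pos : forall a b, (b <= a)%nat -> bin a b <> 0%nat.
Proof. intros a b H E. pose proof (bin_fact a b H). rewrite E in H0. simpl in H0. apply (fact_nz a); lia. Qed.

Lemma cb_nz : forall a b, (b <= a)%nat -> cb a b <> 0.
Proof.
  intros a b H E. unfold cb in E. apply RtoC_inj in E.
  apply (not_0_INR _ (bin_pos a b H)). exact E.
Qed.

Lemma coefL : forall n l K r, (l <= n)%nat -> (n <= r)%nat -> (l <= K)%nat -> (K <= r)%nat ->
  binomC n l * brace r l (K - l) = cb K l * cb (r - l) (r - n) / cb r n.
Proof.
  intros n l K r H1 H2 H3 H4. unfold binomC, brace, cb.
  rewrite <- RtoC_mult, <- RtoC_mult, <- RtoC_div by (apply not_0_INR, bin_pos; lia).
  f_equal. rewrite !binR by lia.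
  replace (r - l - (r - n))%nat with (n - l)%nat by lia.
  replace (r - (r - n))%nat with n by lia.
  replace (K - l + l)%nat with K by lia.
  rewrite !mult_INR. field.
  repeat split; apply INR_fact_nz.
Qed.

Lemma z_nz : forall z, in_H z -> z <> 0.
Proof. intros z H E. subst. unfold in_H in H. simpl in H. lra. Qed.

Lemma mobS : forall z : C, z <> 0 -> mob Smat z = - / z.
Proof. intros z Hz. unfold mob, Smat. field. auto. Qed.

Lemma jfacS : forall z, jfac Smat z = z.
Proof. intros z. unfold jfac, Smat. ring. Qed.

Lemma LHS_eq : forall mu E2 B w r n (z : C), (n <= r)%nat -> z <> 0 ->
  (forall k, (k <= r)%nat -> B k (- / z) = z ^ (w - 2 * k) * B k z) ->
  E2 (- / z) = z * (z * E2 z + Cconst mu) ->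
  / z ^ (w - r) *
      sum_n (fun l => binomC n l * gfun mu E2 B r l (- / z) * (- / z) ^ (n - l)) n
  = sum_n (fun K => sum_n (fun l => if (l <=? K)%nat then
       / z ^ (w - r) * binomC n l * Cconst mu ^ l * (- / z) ^ (n - l) *
       (brace r l (K - l) * (z ^ (w - 2 * K) * B K z) * (z * (z * E2 z + Cconst mu)) ^ (K - l))
       else (0:C)) n) r.
Proof.
  intros mu E2 B w r n z Hn Hz HB HE.
  rewrite <- switch, <- sC_mult_l.
  apply sC_ext; intros l Hl.
  unfold gfun.
  set (G := fun K => brace r l (K - l) * (z ^ (w - 2 * K) * B K z) * (z * (z * E2 z + Cconst mu)) ^ (K - l)).
  assert (E : @eq C (sum_n (fun m => brace r l m * B (l + m)%nat (- / z) * E2 (- / z) ^ m) (r - l))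
                    (sum_n (fun m => G (l + m)%nat) (r - l))).
  { apply sC_ext; intros m Hm. unfold G. rewrite HB by lia. rewrite HE.
    replace (l + m - l)%nat with m by lia. ring. }
  rewrite E, tri by lia.
  set (A := / z ^ (w - r) * binomC n l * Cconst mu ^ l * (- / z) ^ (n - l)).
  assert (E2' : @eq C (sum_n (fun K => if (l <=? K)%nat then A * G K else (0:C)) r)
                      (A * sum_n (fun K => if (l <=? K)%nat then G K else (0:C)) r)).
  { rewrite <- sC_mult_l. apply sC_ext; intros K _. destruct (l <=? K)%nat; ring. }
  unfold G in E2'. unfold G. rewrite E2'. unfold A. cring.
Qed.

Lemma RHS_eq : forall mu E2 B r n (z : C), (n <= r)%nat ->
  (-1) ^ n *
      sum_n (fun m => binomC (r - n) m * gfun mu E2 B r m z * z ^ (r - n - m)) (r - n)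
  = sum_n (fun K => sum_n (fun m => if (m <=? K)%nat then
       (-1) ^ n * binomC (r - n) m * Cconst mu ^ m * z ^ (r - n - m) *
       (brace r m (K - m) * B K z * E2 z ^ (K - m))
       else (0:C)) (r - n)) r.
Proof.
  intros mu E2 B r n z Hn.
  rewrite <- switch, <- sC_mult_l.
  apply sC_ext; intros l Hl.
  unfold gfun.
  set (G := fun K => brace r l (K - l) * B K z * E2 z ^ (K - l)).
  assert (E : @eq C (sum_n (fun m => brace r l m * B (l + m)%nat z * E2 z ^ m) (r - l))
                    (sum_n (fun m => G (l + m)%nat) (r - l))).
  { apply sC_ext; intros m Hm. unfold G.
    replace (l + m - l)%nat with m by lia. ring. }
  rewrite E, tri by lia.
  set (A := (-1) ^ n * binomC (r - n) l * Cconst mu ^ l * z ^ (r - n - l)).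
  assert (E2' : @eq C (sum_n (fun K => if (l <=? K)%nat then A * G K else (0:C)) r)
                      (A * sum_n (fun K => if (l <=? K)%nat then G K else (0:C)) r)).
  { rewrite <- sC_mult_l. apply sC_ext; intros K _. destruct (l <=? K)%nat; ring. }
  unfold G in E2'. unfold G. rewrite E2'. unfold A. cring.
Qed.

Lemma binomC_cb : forall n l, (l <= n)%nat -> binomC n l = cb n l.
Proof. intros; unfold binomC, cb; rewrite binR; auto. Qed.

Lemma ptL : forall mu E2 B w r n K l (z : C), (n <= r)%nat -> (K <= r)%nat -> (2 * r <= w)%nat ->
  (l <= n)%nat -> z <> 0 ->
  (if (l <=? K)%nat then
       / z ^ (w - r) * binomC n l * Cconst mu ^ l * (- / z) ^ (n - l) *
       (brace r l (K - l) * (z ^ (w - 2 * K) * B K z) * (z * (z * E2 z + Cconst mu)) ^ (K - l))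
       else (0:C))
  = (B K z * (-1) ^ n * (z ^ r / (z ^ K * z ^ n)) / cb r n) *
    (cb K l * ((-1) ^ l * cb (r - l) (r - n) * Cconst mu ^ l * (z * E2 z + Cconst mu) ^ (K - l))).
Proof.
  intros mu E2 B w r n K l z Hn HK Hw Hl Hz.
  destruct (Nat.leb_spec l K) as [HlK|HlK].
  2:{ rewrite (cb_gt K l) by lia. ring. }
  pose proof (coefL n l K r Hl Hn HlK HK) as Hc.
  assert (Hb : binomC n l <> 0) by (rewrite binomC_cb by auto; apply cb_nz; auto).
  assert (Hrn : cb r n <> 0) by (apply cb_nz; auto).
  assert (Hbr : brace r l (K - l) = cb K l * cb (r - l) (r - n) / cb r n / binomC n l).
  { rewrite <- Hc. field. auto. }
  rewrite Hbr.
  replace (- / z) with ((-1) * / z) by (field; auto).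
  rewrite !Cpow_mult_l, m1pow_sub, Cpow_inv by auto.
  rewrite (Cpow_sub z w r), (Cpow_sub z w (2 * K)), (Cpow_sub z K l), (Cpow_sub z n l) by (auto; lia).
  replace (2 * K)%nat with (K + K)%nat by lia. rewrite Cpow_add_r.
  assert (z ^ w <> 0) by (apply Cpow_nz; auto).
  assert (z ^ r <> 0) by (apply Cpow_nz; auto).
  assert (z ^ K <> 0) by (apply Cpow_nz; auto).
  assert (z ^ n <> 0) by (apply Cpow_nz; auto).
  assert (z ^ l <> 0) by (apply Cpow_nz; auto).
  field. repeat split; auto.
Qed.

Lemma ptR : forall mu E2 B r n K m (z : C), (n <= r)%nat -> (K <= r)%nat ->
  (m <= r - n)%nat -> z <> 0 ->
  (if (m <=? K)%nat then
       (-1) ^ n * binomC (r - n) m * Cconst mu ^ m * z ^ (r - n - m) *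
       (brace r m (K - m) * B K z * E2 z ^ (K - m))
       else (0:C))
  = (B K z * (-1) ^ n * (z ^ r / (z ^ K * z ^ n)) / cb r n) *
    (cb K m * (cb (r - m) (r - (r - n)) * Cconst mu ^ m * (z * E2 z) ^ (K - m))).
Proof.
  intros mu E2 B r n K m z Hn HK Hm Hz.
  destruct (Nat.leb_spec m K) as [HmK|HmK].
  2:{ rewrite (cb_gt K m) by lia. ring. }
  pose proof (coefL (r - n) m K r Hm ltac:(lia) HmK HK) as Hc.
  assert (Hb : binomC (r - n) m <> 0) by (rewrite binomC_cb by auto; apply cb_nz; auto).
  assert (Hs : cb r (r - n) = cb r n) by (unfold cb; rewrite bin_sym; auto).
  rewrite Hs in Hc.
  assert (Hrn : cb r n <> 0) by (apply cb_nz; auto).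
  assert (Hbr : brace r m (K - m) = cb K m * cb (r - m) (r - (r - n)) / cb r n / binomC (r - n) m).
  { rewrite <- Hc. field. auto. }
  rewrite Hbr.
  rewrite Cpow_mult_l.
  replace (r - n - m)%nat with (r - (n + m))%nat by lia.
  rewrite (Cpow_sub z r (n + m)), (Cpow_sub z K m) by (auto; lia).
  rewrite Cpow_add_r.
  assert (z ^ r <> 0) by (apply Cpow_nz; auto).
  assert (z ^ K <> 0) by (apply Cpow_nz; auto).
  assert (z ^ n <> 0) by (apply Cpow_nz; auto).
  assert (z ^ m <> 0) by (apply Cpow_nz; auto).
  field. repeat split; auto.
Qed.

Theorem mainTheorem8 (mu : nat) (E2 : C -> C) (w r : nat) (B : nat -> C -> C) :
  (3 <= mu)%nat ->
  E2_spec mu E2 ->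
  Nat.Even w ->
  (2 * r <= w)%nat ->
  (forall k, (k <= r)%nat -> automorphic mu (w - 2 * k) (B k)) ->
  forall (n : nat) (z : C), (n <= r)%nat -> in_H z ->
    / z ^ (w - r) *
      sum_n (fun l => binomC n l * gfun mu E2 B r l (- / z) * (- / z) ^ (n - l)) n
    = (-1) ^ n *
      sum_n (fun m => binomC (r - n) m * gfun mu E2 B r m z * z ^ (r - n - m)) (r - n).
Proof.
  intros Hmu HE2 Hw Hwr HB n z Hn Hz.
  pose proof (z_nz z Hz) as Hz0.
  assert (HBS : forall k, (k <= r)%nat -> B k (- / z) = z ^ (w - 2 * k) * B k z).
  { intros k Hk. destruct (HB k Hk) as [_ [Ha _]].
    rewrite <- (mobS z Hz0), Ha by (auto; constructor). rewrite jfacS. reflexivity. }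
  assert (HES : E2 (- / z) = z * (z * E2 z + Cconst mu)).
  { destruct HE2 as [_ [_ HS]]. pose proof (HS z Hz) as H. rewrite mobS in H by auto.
    assert (z ^ 2 <> 0) by (apply Cpow_nz; auto).
    replace (E2 (- / z)) with (E2 (- / z) / z ^ 2 * z ^ 2) by (field; auto).
    rewrite H. simpl. field. auto. }
  rewrite (LHS_eq mu E2 B w r n z Hn Hz0 HBS HES), (RHS_eq mu E2 B r n z Hn).
  apply sC_ext; intros K HK.
  set (Phi := B K z * (-1) ^ n * (z ^ r / (z ^ K * z ^ n)) / cb r n).
  transitivity (Phi * Lf K r (r - n) (z * E2 z) (Cconst mu)).
  - erewrite sC_ext; [| intros l Hl; apply ptL; auto; lia].
    unfold Lf. rewrite <- sC_mult_l.
    rewrite <- (ext_range _ n r) by (auto; intros l Hl; rewrite (cb_gt (r - l) (r - n)) by lia; ring).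
    apply ext_range; auto. intros l Hl; rewrite (cb_gt K l) by lia; ring.
  - rewrite core by lia.
    erewrite (sC_ext _ _ (r - n)); [| intros m Hm; apply ptR; auto; lia].
    unfold Rf. rewrite <- sC_mult_l.
    rewrite <- (ext_range _ (r - n) r) by (try lia; intros m Hm; rewrite (cb_gt (r - m) (r - (r - n))) by lia; ring).
    symmetry. apply ext_range; auto. intros m Hm; rewrite (cb_gt K m) by lia; ring.
Qed.
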